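(* For any time warps $f,g$: (a) $\mathrm{last}(fg)=\omega$ if and only if ($\mathrm{last}(f)=\omega$ and $\mathrm{last}(g)=\omega$); (b) $\mathrm{last}(f)=\omega\iff\mathrm{last}(f^{r})=\omega\iff\mathrm{last}(f^{\ell})=\omega$.
   Context: Let $\overline{\omega}=\omega\cup\{\omega\}$ be the natural numbers with a top element $\omega$ adjoined, with its natural total order. A time warp is a monotone map $f\colon\overline{\omega}\to\overline{\omega}$ with $f(0)=0$ and $f(\omega)=\bigvee\{f(n)\mid n\in\omega\}$. The set $W$ of time warps is ordered pointwise, $fg:=f\circ g$, $\mathrm{id}$ is the identity. The residuals $\backslash,/$ are the binary operations on $W$ with $f\le h/g\iff fg\le h\iff g\le f\backslash h$ for all $f,g,h$. Define $f^{\ell}:=\mathrm{id}/f$ and $f^{r}:=f\backslash\mathrm{id}$. For a time warp $f$, $\mathrm{last}(f):=\bigwedge\{p\in\overline{\omega}\mid f(p)=f(\omega)\}$. *)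

(* Defs.v *)
From mathcomp Require Import all_boot.
From Stdlib Require Import Classical ClassicalEpsilon.

Set Implicit Arguments.
Unset Strict Implicit.
Unset Printing Implicit Defensive.

(* \overline{omega} = omega with a top element adjoined. *)
Inductive wbar : Type := Fin of nat | Om.

Definition wle (x y : wbar) : bool :=
  match x, y with
  | Fin m, Fin n => (m <= n)%N
  | _, Om => true
  | Om, Fin _ => false
  end.

Definition is_sup (s : nat -> wbar) (x : wbar) : Prop :=
  (forall n, wle (s n) x) /\ (forall u, (forall n, wle (s n) u) -> wle x u).

Definition is_inf (S : wbar -> Prop) (x : wbar) : Prop :=
  (forall p, S p -> wle x p) /\ (forall l, (forall p, S p -> wle l p) -> wle l x).

Record tw : Type := TW {
  twf :> wbar -> wbar;
  tw_mono : forall x y, wle x y -> wle (twf x) (twf y);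
  tw_zero : twf (Fin 0) = Fin 0;
  tw_om : is_sup (fun n => twf (Fin n)) (twf Om)
}.

Definition twle (f g : tw) : Prop := forall x, wle (f x) (g x).

Lemma wle_refl x : wle x x.
Proof. by case: x => //= n; exact: leqnn. Qed.

Lemma wle_trans x y z : wle x y -> wle y z -> wle x z.
Proof.
case: x => [m|]; case: y => [n|]; case: z => [k|] //=.
exact: leq_trans.
Qed.

Lemma id_mono x y : wle x y -> wle (id x) (id y).
Proof. by []. Qed.

Lemma id_om : is_sup (fun n => id (Fin n)) (id Om).
Proof.
split => // -[k|] Hu //=.
by have := Hu k.+1; rewrite /= ltnn.
Qed.

Definition tw_id : tw := @TW id id_mono erefl id_om.

Section Comp.
Variables f g : tw.

Lemma comp_mono x y : wle x y -> wle (f (g x)) (f (g y)).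
Proof. by move=> H; apply: tw_mono; apply: tw_mono. Qed.

Lemma comp_zero : f (g (Fin 0)) = Fin 0.
Proof. by rewrite !tw_zero. Qed.

Lemma comp_om : is_sup (fun n => f (g (Fin n))) (f (g Om)).
Proof.
have [gub gleast] := tw_om g.
have [fub fleast] := tw_om f.
split.
  by move=> n; apply: tw_mono; apply: gub.
move=> u Hu.
case Eg: (g Om) => [m|].
  have [n En] : exists n, g (Fin n) = Fin m.
    apply: NNPP => Hne.
    case: m Eg Hne => [|m] Eg Hne.
      by apply: Hne; exists 0; rewrite tw_zero.
    have : wle (g Om) (Fin m).
      apply: gleast => n; have := gub n; rewrite Eg.
      case E: (g (Fin n)) => [k|] //= Hk.
      rewrite -ltnS ltn_neqAle Hk andbT.
      by apply/negP => /eqP Ek; apply: Hne; exists n; rewrite E Ek.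
    by rewrite Eg /= ltnn.
  by rewrite -En; apply: Hu.
apply: fleast => k.
have [n Hn] : exists n, wle (Fin k) (g (Fin n)).
  apply: NNPP => Hne.
  case: k Hne => [|k] Hne.
    by apply: Hne; exists 0; rewrite tw_zero.
  have : wle (g Om) (Fin k).
    apply: gleast => n.
    case E: (g (Fin n)) => [j|] /=.
      rewrite leqNgt; apply/negP => Hj; apply: Hne; exists n; by rewrite E.
    by exfalso; apply: Hne; exists n; rewrite E.
  by rewrite Eg.
apply: wle_trans (Hu n).
exact: tw_mono.
Qed.

Definition tw_comp : tw := @TW (fun x => f (g x)) comp_mono comp_zero comp_om.
End Comp.

(* last(f) := inf { p | f p = f omega }  (the inf exists and is unique in the
   complete chain \overline{omega}; we pick it by classical choice) *)
Definition lastw (f : tw) : wbar :=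
  epsilon (inhabits Om) (fun p => is_inf (fun q => f q = f Om) p).

(* Main.v *)
Require Import Defs.
From mathcomp Require Import all_boot.
From Stdlib Require Import Classical ClassicalEpsilon.
Set Implicit Arguments.
Unset Strict Implicit.
Unset Printing Implicit Defensive.

Lemma wle_anti x y : wle x y -> wle y x -> x = y.
Proof. case: x => [m|]; case: y => [n|] //= H1 H2. by rewrite (@anti_leq m n) // H1 H2. Qed.

Lemma wle_Om x : wle Om x -> x = Om.
Proof. by case: x. Qed.

Lemma wle_fin x y : wle x y -> y <> Om -> x <> Om.
Proof. by case: x => [m|]; case: y. Qed.

Definition Pw (f : tw) := f Om = Om /\ forall n, f (Fin n) <> Om.

Lemma reach (f : tw) k : wle (Fin k) (f Om) -> exists n, wle (Fin k) (f (Fin n)).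
Proof.
case: k => [|k] H.
  by exists 0; rewrite tw_zero.
apply: NNPP => Hn.
have [_ least] := tw_om f.
have : wle (f Om) (Fin k).
  apply: least => n.
  case E: (f (Fin n)) => [j|] /=.
    rewrite leqNgt; apply/negP => Hj; apply: Hn; exists n; by rewrite E.
  by exfalso; apply: Hn; exists n; rewrite E.
by move=> H2; have := wle_trans H H2; rewrite /= ltnn.
Qed.

Lemma lastOm (f : tw) : lastw f = Om <-> Pw f.
Proof.
pose S := fun q => f q = f Om.
have Hex : exists p, is_inf S p.
  case: (classic (exists n, wle (f Om) (f (Fin n)))) => [Hn|Hn].
    have Hn' : exists n, (fun n => wle (f Om) (f (Fin n))) n by [].
    case: (ex_minnP Hn') => n Hfn Hmin. exists (Fin n). split.
      move=> [k|] Hk //=. apply: Hmin. rewrite /S in Hk. rewrite Hk; exact: wle_refl.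
    move=> l Hl; apply: Hl. rewrite /S. apply: wle_anti => //. exact: tw_mono.
  exists Om; split.
    move=> [k|] Hk //. exfalso; apply: Hn; exists k. rewrite Hk; exact: wle_refl.
  by move=> [k|].
have : is_inf S (lastw f) by exact: (epsilon_spec (inhabits Om) _ Hex).
move: (lastw f) => L [Hlow Hgr].
have HQ : L = Om <-> forall n, ~ wle (f Om) (f (Fin n)).
  split.
    move=> HL n Hn. have H : S (Fin n) by apply: wle_anti => //; exact: tw_mono.
    by have := Hlow _ H; rewrite HL.
  move=> Hn. apply: wle_Om. apply: Hgr => -[k|] Hk //.
  exfalso; apply: (Hn k); rewrite /S in Hk; rewrite Hk; exact: wle_refl.
rewrite HQ; split.
  move=> Hn; split.
    case E: (f Om) => [m|] //.
    have Hm : wle (Fin m) (f Om) by rewrite E; exact: wle_refl.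
    have [n Hn2] := reach Hm.
    by exfalso; apply: (Hn n); rewrite E.
  move=> n E; apply: (Hn n); rewrite E; by case: (f Om).
by move=> [HO Hn] n H; rewrite HO in H; apply: (Hn n); apply: wle_Om.
Qed.

Definition liftn (g : nat -> nat) (x : wbar) : wbar :=
  match x with Fin n => Fin (g n) | Om => Om end.

Section Mk.
Variable g : nat -> nat.
Hypothesis gmono : forall m n, m <= n -> g m <= g n.
Hypothesis g0 : g 0 <= 0.
Hypothesis gunb : forall k, exists n, k <= g n.

Lemma liftn_mono x y : wle x y -> wle (liftn g x) (liftn g y).
Proof. case: x => [m|]; case: y => [n|] //=. exact: gmono. Qed.

Lemma liftn_zero : liftn g (Fin 0) = Fin 0.
Proof. by rewrite /= (@anti_leq (g 0) 0) // g0. Qed.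

Lemma liftn_om : is_sup (fun n => liftn g (Fin n)) (liftn g Om).
Proof.
split => // -[j|] Hu //=.
have [n Hn] := gunb j.+1. by have := Hu n; rewrite /= leqNgt Hn.
Qed.

Definition mk_tw : tw := @TW (liftn g) liftn_mono liftn_zero liftn_om.
End Mk.

Definition thr (m : nat) (x : wbar) : wbar := if wle (Fin m.+1) x then Om else Fin 0.

Lemma thr_mono m x y : wle x y -> wle (thr m x) (thr m y).
Proof.
rewrite /thr => Hxy. case: ifP => H1; case: ifP => H2 //=.
by rewrite (wle_trans H1 Hxy) in H2.
Qed.

Lemma thr_zero m : thr m (Fin 0) = Fin 0.
Proof. by []. Qed.

Lemma thr_om m : is_sup (fun n => thr m (Fin n)) (thr m Om).
Proof.
split; first by move=> n; rewrite /thr /=; case: ifP.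
move=> u Hu. have := Hu m.+1. by rewrite /thr /= leqnn.
Qed.

Definition thr_tw m : tw := @TW (thr m) (@thr_mono m) (thr_zero m) (thr_om m).

Section Wit.
Variable f : tw.
Hypothesis Pf : Pw f.

Definition fval n := match f (Fin n) with Fin j => j | Om => 0 end.
Lemma fvalE n : f (Fin n) = Fin (fval n).
Proof. rewrite /fval; case E: (f (Fin n)) => [j|] //. by case: Pf => _ H; case: (H n). Qed.

Definition gR n := \max_(y <- iota 0 n.+1 | wle (f (Fin y)) (Fin n)) y.

Lemma gR_mono m n : m <= n -> gR m <= gR n.
Proof.
move=> Hmn; apply/bigmax_leqP_seq => y Hy Hf.
apply: leq_bigmax_seq.
  by move: Hy; rewrite !mem_iota /= !add0n => Hy; apply: leq_trans Hy _.
exact: wle_trans Hf _.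
Qed.

Lemma gR0 : gR 0 <= 0.
Proof. by apply/bigmax_leqP_seq => y; rewrite mem_iota add0n. Qed.

Lemma gR_unb k : exists n, k <= gR n.
Proof.
exists (maxn k (fval k)). apply: leq_bigmax_seq.
  by rewrite mem_iota add0n ltnS leq_maxl.
by rewrite fvalE /= leq_maxr.
Qed.

Lemma gR_spec n : wle (f (Fin (gR n))) (Fin n).
Proof.
rewrite /gR; apply: (big_ind (fun v => wle (f (Fin v)) (Fin n))) => //.
  by rewrite tw_zero.
move=> a b Ha Hb; rewrite /maxn; by case: ifP.
Qed.

Definition gR_tw := mk_tw gR_mono gR0 gR_unb.

Definition hL n := \max_(y <- iota 0 n.+1 | ~~ wle (Fin n) (f (Fin y))) y.+1.

Lemma hL_mono m n : m <= n -> hL m <= hL n.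
Proof.
move=> Hmn; apply/bigmax_leqP_seq => y Hy Hf.
apply: (leq_bigmax_seq (F := fun y => y.+1)).
  by move: Hy; rewrite !mem_iota /= !add0n => Hy; apply: leq_trans Hy _.
apply/negP => H; move/negP: Hf; apply; exact: (@wle_trans (Fin m) (Fin n) _ Hmn H).
Qed.

Lemma hL0 : hL 0 <= 0.
Proof. apply/bigmax_leqP_seq => y _ /=; by case: (f (Fin y)). Qed.

Lemma hL_unb k : exists n, k <= hL n.
Proof.
exists (maxn k (fval k)).+1. apply: (leq_trans (leqnSn k)).
apply: (leq_bigmax_seq (F := fun y => y.+1)).
  by rewrite mem_iota add0n /= ltnS (leq_trans (leq_maxl k (fval k))).
by rewrite fvalE /= -ltnNge ltnS leq_maxr.
Qed.

Lemma hL_spec n : hL (fval n) <= n.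
Proof.
apply/bigmax_leqP_seq => y _ Hy. rewrite ltnNge; apply/negP => Hny.
apply/negP: Hy. rewrite negbK -fvalE. exact: (@tw_mono f (Fin n) (Fin y)).
Qed.

Definition hL_tw := mk_tw hL_mono hL0 hL_unb.
End Wit.

Lemma compP (f g : tw) : Pw (tw_comp f g) <-> Pw f /\ Pw g.
Proof.
split.
  move=> [HO Hn]; rewrite /= in HO Hn.
  have gn : forall n, g (Fin n) <> Om.
    move=> n E; apply: (Hn n).
    have H := @tw_mono g (Fin n) Om isT; rewrite E in H.
    have gO := wle_Om H.
    by rewrite E -{1}gO.
  have gO : g Om = Om.
    case E: (g Om) => [m|] //.
    have Hm : wle (Fin m) (g Om) by rewrite E; exact: wle_refl.
    have [n Hn2] := reach Hm.
    have : g (Fin n) = Fin m.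
      apply: wle_anti => //. rewrite -E; exact: tw_mono.
    by move=> E2; exfalso; apply: (Hn n); rewrite E2 -E.
  rewrite gO in HO; split; split => // k.
  have Hk : wle (Fin k) (g Om) by rewrite gO.
  have [n Hn2] := reach Hk.
  apply: (wle_fin (y := f (g (Fin n)))) => //. exact: tw_mono.
move=> [[fO fn] [gO gn]]; split => /=; first by rewrite gO.
move=> n; case E: (g (Fin n)) => [k|]; [exact: fn | by case: (gn n)].
Qed.

Theorem lemma2p11
  (ldiv rdiv : tw -> tw -> tw)
  (Hres : forall f g h : tw,
      (twle f (rdiv h g) <-> twle (tw_comp f g) h) /\
      (twle (tw_comp f g) h <-> twle g (ldiv f h)))
  (f g : tw) :
  (lastw (tw_comp f g) = Om <-> (lastw f = Om /\ lastw g = Om)) /\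
  ((lastw f = Om <-> lastw (ldiv f tw_id) = Om) /\
   (lastw (ldiv f tw_id) = Om <-> lastw (rdiv tw_id f) = Om)).
Proof.
rewrite !lastOm compP; split => //.
set r := ldiv f tw_id; set l := rdiv tw_id f.
have Hr1 : forall x, wle (f (r x)) x.
  by apply/(proj2 (Hres f r tw_id)) => x; exact: wle_refl.
have Hr2 : forall h : tw, (forall x, wle (f (h x)) x) -> forall x, wle (h x) (r x).
  by move=> h Hh; apply/(proj2 (Hres f h tw_id)).
have Hl1 : forall x, wle (l (f x)) x.
  by apply/(proj1 (Hres l f tw_id)) => x; exact: wle_refl.
have Hl2 : forall h : tw, (forall x, wle (h (f x)) x) -> forall x, wle (h x) (l x).
  by move=> h Hh; apply/(proj1 (Hres h f tw_id)).
have Hfr : Pw f <-> Pw r.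
  split.
    move=> Pf; split; last first.
      move=> n E; have := Hr1 (Fin n); rewrite E; by case: Pf => ->.
    apply: wle_Om. apply: (Hr2 (gR_tw Pf) _ Om) => -[n|] /=.
      exact: gR_spec.
    by case: (f Om).
  move=> [rO rn]; split; last first.
    move=> k; have Hk : wle (Fin k) (r Om) by rewrite rO.
    have [n Hn] := reach Hk.
    apply: (wle_fin (y := Fin n)) => //.
    apply: wle_trans (Hr1 (Fin n)). exact: tw_mono.
  case E: (f Om) => [m|] //.
  have H := Hr2 (thr_tw m).
  have : wle Om (r (Fin m.+1)).
    have <- : thr_tw m (Fin m.+1) = Om by rewrite /= /thr /= leqnn.
    apply: H => x /=; rewrite /thr; case: ifP => Hx.
      by rewrite E; apply: wle_trans Hx; rewrite /= leqnSn.
    by rewrite tw_zero; case: x {Hx}.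
  by move/wle_Om/rn.
have Hfl : Pw f <-> Pw l.
  split.
    move=> Pf; split; last first.
      move=> n; have Hn : wle (Fin n) (f Om) by case: Pf => ->.
      have [m Hm] := reach Hn.
      apply: (wle_fin (y := Fin m)) => //.
      apply: wle_trans (Hl1 (Fin m)). exact: tw_mono.
    apply: wle_Om. apply: (Hl2 (hL_tw Pf) _ Om) => -[n|] /=.
      rewrite fvalE //=. exact: hL_spec.
    by case: Pf => ->.
  move=> [lO ln]; split; last first.
    move=> k E; have := Hl1 (Fin k); by rewrite E lO.
  case E: (f Om) => [m|] //.
  have H := Hl2 (thr_tw m).
  have : wle Om (l (Fin m.+1)).
    have <- : thr_tw m (Fin m.+1) = Om by rewrite /= /thr /= leqnn.
    apply: H => x /=; rewrite /thr; case: ifP => Hx.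
      have : wle (f x) (f Om) by apply: tw_mono; case: x {Hx}.
      rewrite E => Hx2; have := wle_trans Hx Hx2; by rewrite /= ltnn.
    by case: x {Hx}.
  by move/wle_Om/ln.
split => //. by rewrite -Hfr -Hfl.
Qed.
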